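(* Let $G$ be a biconnected series-parallel graph without transitive edges, and let $G'$ be a component of $G$ with respect to some separation pair $(s,t)$. Then $G'$ is critical if and only if $G'$ is heavy.
   Context: A biconnected graph is series-parallel if it contains no subdivision of $K_4$. For a biconnected graph $G$, a separation pair is a pair $(s,t)$ of vertices such that $G-s-t$ is disconnected. A transitive edge is an edge joining the two vertices of some separation pair. A component of $G$ with respect to $(s,t)$ is the subgraph induced by $s$, $t$ and the vertex set of one connected component of $G-s-t$; $s,t$ are its poles and its other vertices are internal vertices. A component $G'$ w.r.t. $(s,t)$ is heavy if it has an internal vertex adjacent to neither $s$ nor $t$; otherwise it is light. A component $G'$ is critical if there exist an internal vertex $v$ of $G'$ adjacent to neither $s$ nor $t$, and a simple $s$–$t$ path in $G'$ passing through $v$, written $s - p_s - v - p_t - t$, such that no vertex of the subpath $p_s$ strictly between $s$ and $v$ is adjacent to $t$, and no vertex of the subpath $p_t$ strictly between $v$ and $t$ is adjacent to $s$. *)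

(* Defs.v *)
From mathcomp Require Import all_boot.
Set Implicit Arguments. Unset Strict Implicit. Unset Printing Implicit Defensive.

Section Graphs.
Variable T : finType.
Variable e : rel T.

Definition simple_graph : Prop := symmetric e /\ irreflexive e.

Definition connect_in (S : {set T}) (x y : T) : bool :=
  [&& x \in S, y \in S & connect [rel u v | [&& e u v, u \in S & v \in S]] x y].

Definition connected_set (S : {set T}) : Prop :=
  forall x y, x \in S -> y \in S -> connect_in S x y.

Definition biconnected : Prop :=
  2 < #|T| /\ connected_set [set: T] /\
  forall v : T, connected_set (~: [set v]).

(* simple path  x :: q ++ [:: y]  given by its sequence q of internal vertices *)
Definition spath (x y : T) (q : seq T) : bool :=
  path e x (rcons q y) && uniq (x :: rcons q y).

Definition has_K4_subdivision : Prop :=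
  exists (b : 'I_4 -> T) (Q : 'I_4 -> 'I_4 -> seq T),
    injective b /\
    (forall i j : 'I_4, i < j -> spath (b i) (b j) (Q i j)) /\
    (forall (i j : 'I_4) (m : 'I_4), i < j -> b m \notin Q i j) /\
    (forall i j k l : 'I_4, i < j -> k < l -> (i, j) != (k, l) ->
        [disjoint (Q i j) & (Q k l)]).

Definition series_parallel : Prop := biconnected /\ ~ has_K4_subdivision.

Definition separation_pair (s t : T) : Prop :=
  s != t /\ ~ connected_set (~: [set s; t]).

Definition no_transitive_edges : Prop :=
  forall s t, separation_pair s t -> ~~ e s t.

(* C is the vertex set of a connected component of G - s - t; the component
   of G w.r.t. (s,t) is the subgraph induced by C ∪ {s,t} (C = internal
   vertices, s t = poles). *)
Definition component_of (s t : T) (C : {set T}) : Prop :=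
  exists2 x, x \notin [set s; t] &
    C = [set y | connect_in (~: [set s; t]) x y].

Definition heavy (s t : T) (C : {set T}) : Prop :=
  exists2 v, v \in C & ~~ e v s && ~~ e v t.

Definition critical (s t : T) (C : {set T}) : Prop :=
  exists v (q1 q2 : seq T),
    [/\ v \in C, ~~ e v s & ~~ e v t] /\
    [/\ spath s t (q1 ++ v :: q2),
        all (fun z => z \in C) (q1 ++ v :: q2),
        all (fun z => ~~ e z t) q1 &
        all (fun z => ~~ e z s) q2].

End Graphs.

(* Main.v *)
Require Import Defs.
From mathcomp Require Import all_boot.
From mathcomp Require Import zify.
Set Implicit Arguments. Unset Strict Implicit. Unset Printing Implicit Defensive.

Lemma sorted_cat_cons (T : Type) (r : rel T) L1 a L2 :
  sorted r (L1 ++ a :: L2) = sorted r (rcons L1 a) && sorted r (a :: L2).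
Proof.
case: L1 => [|x L1] /=; first by [].
by rewrite cat_path rcons_path /= andbA.
Qed.

Lemma first_hit (T : Type) (r : rel T) (S : pred T) x p :
  ~~ S x -> S (last x p) ->
  exists B b rest, [/\ p = B ++ b :: rest, S b & all (predC S) B].
Proof.
elim: p x => [|y p IH] x /=; first by move=> /negPf ->.
move=> nSx; case Sy: (S y).
  by move=> _; exists [::], y, p.
move=> /(IH y (negbT Sy)) [B [b [rest [-> Sb aB]]]].
by exists (y :: B), b, rest; rewrite /= Sy.
Qed.

Lemma split_last_in (T : Type) (P : pred T) X :
  has P X -> exists X1 c X2, [/\ X = X1 ++ c :: X2, P c & all (predC P) X2].
Proof.
elim/last_ind: X => [//|X z IH].
rewrite -cats1 has_cat /= orbF.
case Pz: (P z).
  by move=> _; exists X, z, [::].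
rewrite orbF => /IH [X1 [c [X2 [-> Pc aX2]]]].
by exists X1, c, (rcons X2 z); rewrite -catA /= cats1 all_rcons /= Pz.
Qed.

Lemma path_prefix (T : Type) (r : rel T) x B b rest :
  path r x (B ++ b :: rest) -> path r x (rcons B b).
Proof. by rewrite cat_path rcons_path /= => /andP [-> /andP [->]]. Qed.

Lemma uniq_prefix (T : eqType) (x : T) B b rest :
  uniq (x :: (B ++ b :: rest)) -> uniq (x :: rcons B b).
Proof.
move=> U; have : uniq ((x :: rcons B b) ++ rest) by rewrite cat_cons -cats1 -catA.
by rewrite cat_uniq => /andP [].
Qed.
Lemma has_in_cat (T : eqType) (s1 s2 l : seq T) :
  has [in s1 ++ s2] l = has [in s1] l || has [in s2] l.
Proof. by rewrite has_sym has_cat !(has_sym _ l). Qed.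

Lemma has_in_cons (T : eqType) (x : T) (s l : seq T) :
  has [in x :: s] l = (x \in l) || has [in s] l.
Proof. by rewrite has_sym /= has_sym. Qed.

Lemma has_in_rev (T : eqType) (s l : seq T) :
  has [in rev s] l = has [in s] l.
Proof. by rewrite has_sym has_rev has_sym. Qed.

Lemma has_in_nil (T : eqType) (l : seq T) : has [in [::]] l = false.
Proof. by elim: l. Qed.

Lemma has_cons' (T : Type) (p : pred T) x s : has p (x :: s) = p x || has p s.
Proof. by []. Qed.

Lemma has_nil' (T : Type) (p : pred T) : has p [::] = false.
Proof. by []. Qed.

Ltac norm1 := rewrite ?cons_uniq ?cat_uniq ?rcons_cat ?rcons_uniq ?rev_uniq;
  rewrite ?has_cons' ?has_cat ?has_rcons ?has_rev ?has_nil';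
  rewrite ?has_in_cat ?has_in_cons ?has_in_rev ?has_in_nil;
  rewrite ?mem_cat ?mem_rcons ?in_cons ?mem_rev ?in_nil ?negb_or ?orbF ?andbT ?andbF.
Ltac norm := repeat progress norm1.

Ltac splitall := repeat match goal with H : is_true (_ && _) |- _ => let H1 := fresh "H" in let H2 := fresh "H" in case/andP: H => H1 H2 end.

Ltac closeatom := solve [assumption | rewrite has_sym; assumption | rewrite eq_sym; assumption | by []].

Ltac goalsplit := repeat (apply/andP; split).

Lemma test (T : eqType) (w t x : T) a1 a2 :
  uniq (w :: rcons (a1 ++ x :: a2) t) -> uniq (a1 ++ a2) && (t \notin a1).
Proof.
norm; intros; splitall; goalsplit; closeatom.
Qed.

Lemma K4_core (T : finType) (e : rel T) (w x t y : T) a1 a2 c1 c2 B :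
  path e w (rcons a1 x) -> path e x (rcons a2 t) -> e w t ->
  path e w (rcons c1 y) -> path e t (rcons c2 y) -> path e x (rcons B y) ->
  uniq (w :: x :: t :: y :: a1 ++ a2 ++ c1 ++ c2 ++ B) -> has_K4_subdivision e.
Proof.
move=> p01 p12 e02 p03 p23 p13 U.
have U4 : uniq [:: w; x; t; y].
  move: U; norm; intros; splitall; goalsplit; closeatom.
exists (fun i : 'I_4 => nth w [:: w; x; t; y] i).
exists (fun i j : 'I_4 => nth [::] (nth [::] [:: [:: [::]; a1; [::]; c1];
   [:: [::]; [::]; a2; B]; [:: [::]; [::]; [::]; c2]] i) j).
split; last split; last split.
- move=> i j /eqP; rewrite nth_uniq // => /eqP; exact: val_inj.
- move: U; norm => U; splitall.
  by case=> [[|[|[|[|//]]]] ?] [[|[|[|[|//]]]] ?] //= _; rewrite /spath /=;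
    norm; rewrite ?p01 ?p12 ?e02 ?p03 ?p23 ?p13 /=; goalsplit; closeatom.
- move: U; norm => U; splitall.
  by case=> [[|[|[|[|//]]]] ?] [[|[|[|[|//]]]] ?] [[|[|[|[|//]]]] ?] //= _;
    norm; closeatom.
- move: U; norm => U; splitall.
  by case=> [[|[|[|[|//]]]] ?] [[|[|[|[|//]]]] ?] [[|[|[|[|//]]]] ?] [[|[|[|[|//]]]] ?] //= _ _ _;
    rewrite disjoint_has; norm; closeatom.
Qed.

Lemma path_rev_sym (T : eqType) (e : rel T) (esym : symmetric e) x p y :
  path e x (rcons p y) -> path e y (rcons (rev p) x).
Proof.
move=> H; rewrite -rev_cons -[y](last_rcons x p) -(belast_rcons x p y) rev_path.
by rewrite (@eq_path _ _ e) // => a b /=; rewrite esym.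
Qed.

Lemma K4_wrap (T : finType) (e : rel T) (esym : symmetric e) w t x y a1 a2 c1 c2 B :
  e w t -> spath e w t (a1 ++ x :: a2) -> spath e w t (c1 ++ y :: c2) ->
  ~~ has [in a1 ++ x :: a2] (c1 ++ y :: c2) -> spath e x y B ->
  ~~ has [in a1 ++ x :: a2] B -> ~~ has [in c1 ++ y :: c2] B ->
  w \notin B -> t \notin B -> has_K4_subdivision e.
Proof.
move=> ewt /andP [P1 U1] /andP [P2 U2] D12 /andP [P3 U3] D13 D23 wB tB.
move: P1 P2; rewrite !rcons_cat !cat_path /=.
move=> /andP [pa1 /andP [ea1 pa2]] /andP [pc1 /andP [ec1 pc2]].
apply: (@K4_core _ e w x t y a1 a2 c1 (rev c2) B).
- by rewrite rcons_path pa1.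
- exact: pa2.
- exact: ewt.
- by rewrite rcons_path pc1.
- exact: path_rev_sym.
- exact: P3.
move: U1 U2 U3 D12 D13 D23 wB tB; norm; intros; splitall; goalsplit; closeatom.
Qed.

Lemma restr_path (T : finType) (e : rel T) (S : {set T}) x p :
  path [rel u v | [&& e u v, u \in S & v \in S]] x p -> path e x p && all [in S] p.
Proof.
elim: p x => //= y p IH x /andP [/and3P [exy _ yS] /IH /andP [-> ->]].
by rewrite exy yS.
Qed.

Lemma path_restr (T : finType) (e : rel T) (S : {set T}) x p :
  x \in S -> path e x p -> all [in S] p ->
  path [rel u v | [&& e u v, u \in S & v \in S]] x p.
Proof.
elim: p x => //= y p IH x xS /andP [exy pp] /andP [yS aS].
by rewrite exy xS yS (IH y).
Qed.

Lemma connect_in_walk (T : finType) (e : rel T) (S : {set T}) x y :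
  connect_in e S x y ->
  exists p, [/\ path e x p, last x p = y, x \in S & all [in S] p].
Proof.
case/and3P => xS yS /connectP [p /restr_path /andP [pp ap] ->].
by exists p.
Qed.

Lemma walk_connect_in (T : finType) (e : rel T) (S : {set T}) x p :
  x \in S -> path e x p -> all [in S] p ->
  forall z, z \in x :: p -> connect_in e S x z.
Proof.
move=> xS pp ap z zp; rewrite /connect_in xS.
have zS : z \in S.
  by move: zp; rewrite inE => /orP [/eqP -> // | /(allP ap)].
rewrite zS /=.
elim: p x xS pp ap zp => [|y p IH] x xS /=.
  by move=> _ _; rewrite inE => /eqP ->; apply: connect0.
move=> /andP [exy pp] /andP [yS ap]; rewrite inE => /orP [/eqP -> | zp].
  exact: connect0.
apply: connect_trans (IH y yS pp ap zp).
by apply: connect1; rewrite /= exy xS yS.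
Qed.

Lemma connect_in_sym (T : finType) (e : rel T) (esym : symmetric e) (S : {set T}) x y :
  connect_in e S x y -> connect_in e S y x.
Proof.
case/and3P => xS yS c; rewrite /connect_in xS yS /=.
rewrite sym_connect_sym // => a b /=.
by rewrite esym; case: (a \in S); case: (b \in S); rewrite ?andbF.
Qed.

Lemma connect_in_trans (T : finType) (e : rel T) (S : {set T}) x y z :
  connect_in e S x y -> connect_in e S y z -> connect_in e S x z.
Proof.
case/and3P => xS yS c1 /and3P [_ zS c2].
by rewrite /connect_in xS zS /= (connect_trans c1 c2).
Qed.

Lemma path_cat_cons (T : Type) (r : rel T) a X b Y :
  path r a (X ++ b :: Y) = path r a (rcons X b) && path r b Y.
Proof. by rewrite cat_path rcons_path /= andbA. Qed.

Lemma splice (T : eqType) (e : rel T) L1 a Mid b L2 R :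
  sorted e (L1 ++ a :: Mid ++ b :: L2) -> uniq (L1 ++ a :: Mid ++ b :: L2) ->
  path e a (rcons R b) -> uniq R -> ~~ has [in L1 ++ a :: Mid ++ b :: L2] R ->
  [/\ sorted e (L1 ++ a :: R ++ b :: L2), uniq (L1 ++ a :: R ++ b :: L2),
      forall h, head h (L1 ++ a :: R ++ b :: L2) = head h (L1 ++ a :: Mid ++ b :: L2) &
      forall h, last h (L1 ++ a :: R ++ b :: L2) = last h (L1 ++ a :: Mid ++ b :: L2)].
Proof.
move=> so U pR uR hR; split.
- move: so; rewrite !sorted_cat_cons /= !path_cat_cons => /and3P [-> _ ->].
  by rewrite pR.
- move: U uR hR; norm; intros; splitall; goalsplit; closeatom.
- by move=> h; destruct L1.
- by move=> h; rewrite !last_cat /= !last_cat.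
Qed.

Definition stp (T : eqType) (e : rel T) s t L :=
  [&& sorted e L, uniq L, head t L == s & last s L == t].

Lemma size_prefix_lt (T : Type) n (A1 A2 : seq T) z :
  size (A1 ++ z :: A2) < n.+1 -> size A1 < n.
Proof. rewrite size_cat /=; lia. Qed.

Lemma splice_stp (T : eqType) (e : rel T) (esym : symmetric e) s t L a b R :
  stp e s t L -> a \in L -> b \in L -> a != b -> path e a (rcons R b) -> uniq R ->
  ~~ has [in L] R -> exists L', stp e s t L' /\ {subset R <= L'}.
Proof.
case/and4P => so U hd lt aL bL ab pR uR hR.
case/splitPr: aL so U hd lt bL hR => L1 L2 so U hd lt.
rewrite mem_cat inE eq_sym (negbTE ab) /=.
case/orP => [bL1 | bL2] hR.
- case/splitPr: bL1 so U hd lt hR => L0 Mid.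
  rewrite -catA cat_cons => so U hd lt hR.
  have := splice so U (path_rev_sym esym pR); rewrite rev_uniq has_rev.
  move=> /(_ uR hR) [so' U' hd' lt'].
  exists (L0 ++ b :: rev R ++ a :: L2); split.
  + by rewrite /stp so' U' hd' lt' hd lt.
  + by move=> z zR; rewrite mem_cat inE mem_cat mem_rev zR /= !orbT.
- case/splitPr: bL2 so U hd lt hR => Mid L3 so U hd lt hR.
  have [so' U' hd' lt'] := splice so U pR uR hR.
  exists (L1 ++ a :: R ++ b :: L3); split.
  + by rewrite /stp so' U' hd' lt' hd lt.
  + by move=> z zR; rewrite mem_cat inE mem_cat zR /= !orbT.
Qed.

Lemma stp_ends (T : eqType) (e : rel T) s t L :
  s != t -> stp e s t L -> (s \in L) && (t \in L).
Proof.
move=> st /and4P [_ _ hd lt]; case: L hd lt => [|x L] /=.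
  by move=> /eqP ts; rewrite ts eqxx in st.
move=> /eqP -> /eqP <-; by rewrite mem_head mem_last.
Qed.

Lemma claimA_ind (T : finType) (e : rel T) (esym : symmetric e)
  (Hb : forall a, connected_set e (~: [set a])) s t v :
  s != t -> forall n L A a, stp e s t L -> a \in L -> path e v (rcons A a) ->
  uniq (v :: rcons A a) -> size A < n -> exists L', stp e s t L' && (v \in L').
Proof.
move=> st; elim=> [//|n IH] L A a sL aL pA uA szA.
case vL: (v \in L); first by exists L; rewrite sL.
case hA: (has [in L] A).
  case/hasP: hA => z zA zL.
  case/splitPr: zA pA uA szA => A1 A2 pA uA szA.
  apply: (IH L A1 z sL zL).
  - by move: pA; rewrite rcons_cat; apply: path_prefix.
  - by move: uA; rewrite rcons_cat; apply: uniq_prefix.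
  - exact: size_prefix_lt szA.
have notL : forall z, z \in v :: A -> z \notin L.
  move=> z; rewrite inE => /orP [/eqP -> | zA]; first by rewrite vL.
  by apply/negP => zL; move/negP: hA; apply; apply/hasP; exists z.
have /andP [sL' tL'] := stp_ends st sL.
pose g := if a == s then t else s.
have gL : g \in L by rewrite /g; case: (a == s).
have ga : g != a.
  rewrite /g; case as_: (a == s).
    by move/eqP: as_ => ->; rewrite eq_sym.
  by rewrite eq_sym as_.
have va : v != a by apply/eqP => va; rewrite va aL in vL.
have := Hb a v g; rewrite !inE va ga => /(_ isT isT).
case/connect_in_walk => p [pp lp _ ap].
move: lp; case: (shortenP pp) => p' pp' up' sub' lp'.
have [||B [b [rest [Ep bL aB]]]] := @first_hit _ e [in L] v p'.
- by rewrite /= vL.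
- by rewrite /= lp'.
have pB : path e v (rcons B b) by move: pp'; rewrite Ep; apply: path_prefix.
have uB : uniq (v :: rcons B b) by move: up'; rewrite Ep; apply: uniq_prefix.
have ba : b != a.
  have : b \in p' by rewrite Ep mem_cat mem_head orbT.
  by move/sub'/(allP ap); rewrite !inE.
have notLB : forall z, z \in v :: B -> z \notin L.
  move=> z; rewrite inE => /orP [/eqP -> | zB]; first by rewrite vL.
  exact: (allP aB).
have [X1 [c [X2 [EX cA aX2]]]] := @split_last_in _ [in v :: A] (v :: B)
  (introT hasP (ex_intro2 _ _ v (mem_head v B) (mem_head v A))).
have [Y1 [Y2 EY]] : exists Y1 Y2, v :: A = Y1 ++ c :: Y2.
  by case/splitPr: cA => Y1 Y2; exists Y1, Y2.
have pY2 : path e c (rcons Y2 a).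
  have : sorted e (v :: rcons A a) := pA.
  by rewrite -rcons_cons EY rcons_cat sorted_cat_cons => /andP [].
have pX2 : path e c (rcons X2 b).
  have : sorted e (v :: rcons B b) := pB.
  by rewrite -rcons_cons EX rcons_cat sorted_cat_cons => /andP [].
have uY : uniq (Y1 ++ c :: rcons Y2 a).
  by have := uA; rewrite -[v :: rcons A a]rcons_cons EY rcons_cat.
have uX : uniq (X1 ++ c :: rcons X2 b).
  by have := uB; rewrite -[v :: rcons B b]rcons_cons EX rcons_cat.
have dXY : ~~ has [in Y2] X2.
  apply/hasPn => z zX; have := allP aX2 z zX.
  by rewrite /= EY mem_cat inE !negb_or => /and3P [].
pose R := rev Y2 ++ c :: X2.
have pR : path e a (rcons R b).
  by rewrite /R rcons_cat rcons_cons path_cat_cons (path_rev_sym esym pY2) pX2.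
have uR : uniq R.
  move: uY uX dXY; rewrite /R; norm; intros; splitall; goalsplit; closeatom.
have hR : ~~ has [in L] R.
  apply/hasPn => z; rewrite /R mem_cat mem_rev inE => /or3P [zY | /eqP -> | zX].
  - by apply: notL; rewrite EY mem_cat inE zY !orbT.
  - exact: notL.
  - by apply: notLB; rewrite EX mem_cat inE zX !orbT.
have ba' : a != b by rewrite eq_sym.
have [L' [sL'' subR]] := splice_stp esym sL aL bL (ba' : a != b) pR uR hR.
have cL' : c \in L' by apply: subR; rewrite /R mem_cat mem_head orbT.
case: Y1 EY {uY} => [|y Y1] /=.
  by case=> -> _; exists L'; rewrite sL''.
case=> _ EA; apply: (IH L' Y1 c sL'' cL').
- by move: pA; rewrite EA rcons_cat; apply: path_prefix.
- by move: uA; rewrite EA rcons_cat; apply: uniq_prefix.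
- by move: szA; rewrite EA; apply: size_prefix_lt.
Qed.

Lemma claimA (T : finType) (e : rel T) (esym : symmetric e)
  (Hc : connected_set e [set: T]) (Hb : forall a, connected_set e (~: [set a])) s t v :
  s != t -> v != s -> v != t -> exists q1 q2, spath e s t (q1 ++ v :: q2).
Proof.
move=> st vs vt.
have := Hc s t; rewrite !inE => /(_ isT isT) /connect_in_walk [p [pp lp _ _]].
move: lp; case: (shortenP pp) => p' pp' up' _ lp'.
have sL : stp e s t (s :: p') by apply/and4P; split; rewrite //= lp'.
have := Hc v s; rewrite !inE => /(_ isT isT) /connect_in_walk [pv [ppv lpv _ _]].
move: lpv; case: (shortenP ppv) => pv' ppv' upv' _.
case/lastP: pv' ppv' upv' => [|A z] ppv' upv' /=.
  by move=> vs'; rewrite vs' eqxx in vs.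
rewrite last_rcons => zs; subst z.
have [L /andP [/and4P [so U hd lt] vL]] :=
  claimA_ind esym Hb st (n := (size A).+1) sL (mem_head s p') ppv' upv' (ltnSn _).
case: L so U hd lt vL => [|x M] //= so U /eqP hx; subst x.
case/lastP: M so U => [|P z] so U; first by rewrite /= (negbTE st).
rewrite last_rcons => /eqP zt; subst z.
rewrite inE (negbTE vs) /= mem_rcons inE (negbTE vt) /= => vP.
case/splitPr: vP so U => q1 q2 so U.
by exists q1, q2; apply/andP; split.
Qed.

Lemma sep_C (T : finType) (C : {set T}) X Y :
  all [in C] X -> all [predC C] Y -> ~~ has [in X] Y.
Proof.
move=> aX aY; apply/hasPn => z zY; apply/negP => zX.
by have := allP aY z zY; rewrite /= (allP aX z zX).
Qed.

Lemma side (T : finType) (e : rel T) (esym : symmetric e)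
  (noK4 : ~ has_K4_subdivision e) (Hnt : no_transitive_edges e)
  (C : {set T}) s t v q1 q2 R :
  spath e s t (q1 ++ v :: q2) -> all [in C] (q1 ++ v :: q2) ->
  spath e s t R -> all [predC C] R -> all (fun z => ~~ e z t) q1.
Proof.
move=> /andP [pP uP] aC /andP [pR uR] aR.
apply/allP => w wq1; apply/negP => ewt; apply: noK4.
case/splitPr: wq1 pP uP aC => d1 d2; rewrite -catA cat_cons => pP uP aC.
have dCR := sep_C aC aR.
pose A1 := d2 ++ v :: q2.
pose A2 := rev d1 ++ s :: R.
have pA1 : path e w (rcons A1 t).
  by move: pP; rewrite rcons_cat rcons_cons path_cat_cons => /andP [].
have pA2 : path e w (rcons A2 t).
  move: pP; rewrite rcons_cat rcons_cons path_cat_cons => /andP [p1 _].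
  by rewrite /A2 rcons_cat rcons_cons path_cat_cons (path_rev_sym esym p1).
have U1 : uniq (w :: rcons A1 t).
  move: uP; rewrite /A1; norm; intros; splitall; goalsplit; closeatom.
have U2 : uniq (w :: rcons A2 t).
  move: uP uR dCR; rewrite /A2; norm; intros; splitall; goalsplit; closeatom.
have D12 : ~~ has [in A1] A2.
  move: uP uR dCR; rewrite /A1 /A2; norm; intros; splitall; goalsplit; closeatom.
have [wt vw vt sw] : [/\ w != t, v != w, v != t & s != w].
  move: uP uR dCR; norm; intros; splitall; split; closeatom.
have [st' vs vd1 vR] : [/\ s != t, v != s, v \notin d1 & v \notin R].
  move: uP uR dCR; norm; intros; splitall; split; closeatom.
have cvs : connect_in e (~: [set w; t]) v s.
  apply/negPn/negP => nc.
  have H := Hnt w t; rewrite ewt in H.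
  suff : separation_pair e w t by move/H.
  split => // Hcs; move/negP: nc; apply; apply: Hcs; rewrite !inE negb_or.
  - by rewrite vw vt.
  - by rewrite sw st'.
case/connect_in_walk: cvs => p [pp lp _ ap].
have [||B0 [y [rest [Ep yA2 aB0]]]] := @first_hit _ e [in A2] v p.
- by rewrite /= /A2 mem_cat mem_rev inE !negb_or vd1 vs vR.
- by rewrite /= lp /A2 mem_cat inE eqxx orbT.
have vA1 : v \in A1 by rewrite /A1 mem_cat mem_head orbT.
have pB0 : path e v (rcons B0 y) by move: pp; rewrite Ep; apply: path_prefix.
have [X1 [x [X2 [EX xA1 aX2]]]] := @split_last_in _ [in A1] (v :: B0)
  (introT hasP (ex_intro2 _ _ v (mem_head v B0) vA1)).
have pX2 : path e x (rcons X2 y).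
  have : sorted e (v :: rcons B0 y) := pB0.
  by rewrite -[v :: rcons B0 y]rcons_cons EX rcons_cat sorted_cat_cons => /andP [].
have X2good : forall z, z \in X2 -> [/\ z \notin A1, z \notin A2, z != w & z != t].
  move=> z zX2; have zA1 := allP aX2 z zX2.
  have zB0 : z \in B0.
    have : z \in v :: B0 by rewrite EX mem_cat inE zX2 !orbT.
    rewrite inE => /orP [/eqP zv | //]; by move: zA1; rewrite zv /= vA1.
  have zp : z \in p by rewrite Ep mem_cat zB0.
  have := allP ap z zp; rewrite !inE negb_or => /andP [-> ->].
  by split => //; first [exact: zA1 | exact: (allP aB0 z zB0)].
have xy : x != y.
  apply/eqP => exy; move/hasPn: D12 => /(_ y yA2); by rewrite -exy xA1.
have ly : last x (rcons X2 y) = y by rewrite last_rcons.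
move: ly; case: (shortenP pX2) => p'' pp'' up'' sub''.
case/lastP: p'' pp'' up'' sub'' => [|B' z] pp'' up'' sub'' /=.
  by move=> exy; rewrite exy eqxx in xy.
rewrite last_rcons => zy; subst z.
have B'good : forall z, z \in B' -> [/\ z \notin A1, z \notin A2, z != w & z != t].
  move=> z zB'; apply: X2good.
  have : z \in rcons X2 y.
    by apply: sub''; rewrite mem_rcons in_cons zB' orbT.
  rewrite mem_rcons in_cons => /orP [/eqP zy | //].
  by move: up''; rewrite /= mem_rcons in_cons -zy rcons_uniq zB' /= !andbF.
have [a1 [a2 E1]] : exists a1 a2, A1 = a1 ++ x :: a2.
  by case/splitPr: xA1 => a1 a2; exists a1, a2.
have [c1 [c2 E2]] : exists c1 c2, A2 = c1 ++ y :: c2.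
  by case/splitPr: yA2 => c1 c2; exists c1, c2.
apply: (@K4_wrap _ e esym w t x y a1 a2 c1 c2 B' ewt).
- by rewrite -E1; apply/andP.
- by rewrite -E2; apply/andP.
- by rewrite -E1 -E2.
- by apply/andP.
- by rewrite -E1; apply/hasPn => z /B'good [].
- by rewrite -E2; apply/hasPn => z /B'good [].
- by apply/negP => /B'good [_ _ /eqP []].
- by apply/negP => /B'good [_ _ _ /eqP []].
Qed.

Lemma rev_mid (T : Type) (q1 q2 : seq T) v : rev (q1 ++ v :: q2) = rev q2 ++ v :: rev q1.
Proof. by rewrite rev_cat rev_cons cat_rcons. Qed.

Lemma spath_rev (T : finType) (e : rel T) (esym : symmetric e) s t q :
  spath e s t q -> spath e t s (rev q).
Proof.
case/andP => pq uq; apply/andP; split; first exact: path_rev_sym.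
by rewrite -rev_cons -rev_rcons rev_uniq.
Qed.

Lemma all_connected (T : finType) (e : rel T) (esym : symmetric e) (S : {set T}) s L t :
  path e s (rcons L t) -> all [in S] L ->
  forall y z, y \in L -> z \in L -> connect_in e S y z.
Proof.
case: L => [|h L] //= /andP [_ p] /andP [hS aS] y z yL zL.
move: p; rewrite rcons_path => /andP [p _].
have Hy := walk_connect_in hS p aS yL.
have Hz := walk_connect_in hS p aS zL.
exact: connect_in_trans (connect_in_sym esym Hy) Hz.
Qed.

Lemma spath_inner (T : finType) (s t : T) L :
  uniq (s :: rcons L t) -> all [in ~: [set s; t]] L.
Proof.
rewrite /= mem_rcons in_cons negb_or rcons_uniq => /andP [/andP [_ sL] /andP [tL _]].
apply/allP => z zL; rewrite !inE negb_or; apply/andP; split.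
- by apply/eqP => zs; rewrite -zs zL in sL.
- by apply/eqP => zt; rewrite -zt zL in tL.
Qed.

Lemma toward (T : finType) (e : rel T) (Hb : forall a, connected_set e (~: [set a])) s t d :
  s != t -> d != s -> d != t ->
  exists P, path e d (rcons P s) /\ all [in ~: [set s; t]] P.
Proof.
move=> st ds dt.
have := Hb t d s; rewrite !inE dt st => /(_ isT isT) /connect_in_walk [p [pp lp _ ap]].
have [||P [s' [rest [Ep /eqP es' aP]]]] := @first_hit _ e (pred1 s) d p.
- by rewrite /= ds.
- by rewrite /= lp.
subst s'; exists P; split; first by move: pp; rewrite Ep; apply: path_prefix.
apply/allP => z zP; rewrite !inE negb_or.
have := allP aP z zP; rewrite /= => ->.
have : z \in p by rewrite Ep mem_cat zP.
by move/(allP ap); rewrite !inE.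
Qed.

Unset Implicit Arguments.

Theorem lemma2 (T : finType) (e : rel T) :
  simple_graph e -> biconnected e -> series_parallel e ->
  no_transitive_edges e ->
  forall (s t : T) (C : {set T}),
    separation_pair e s t -> component_of e s t C ->
    (critical e s t C <-> heavy e s t C).
Proof.
move=> [esym eirr] [n3 [Hc Hb]] [_ noK4] Hnt s t C [st Hsep] [x0 x0S EC].
split.
  by case=> v [q1 [q2 [[vC nvs nvt] _]]]; exists v => //; rewrite nvs nvt.
case=> v vC /andP [nvs nvt].
set S := ~: [set s; t] in Hsep x0S EC.
have Cdef : forall y, (y \in C) = connect_in e S x0 y by move=> y; rewrite EC inE.
have inC : forall y z, y \in C -> connect_in e S y z -> z \in C.
  by move=> y z; rewrite !Cdef => H1 H2; apply: connect_in_trans H1 H2.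
have inC' : forall y z, y \in C -> connect_in e S z y -> z \in C.
  by move=> y z yC H; apply: inC yC (connect_in_sym esym H).
have vS : v \in S by move: vC; rewrite Cdef => /and3P [].
have [vs vt] : v != s /\ v != t by move: vS; rewrite !inE negb_or => /andP [].
have [q1 [q2 sP]] := claimA esym Hc Hb st vs vt.
have aC : all [in C] (q1 ++ v :: q2).
  case/andP: sP => pq uq; apply/allP => z zL; apply: (inC v z vC).
  apply: (all_connected esym pq (spath_inner uq)) => //.
  by rewrite mem_cat mem_head orbT.
have [R [sR aR]] : exists R, spath e s t R /\ all [predC C] R.
  have [d dS dC] : exists2 d, d \in S & d \notin C.
    case: (boolP [exists d, (d \in S) && (d \notin C)]).
      by case/existsP => d /andP [dS dC]; exists d.
    move/existsPn => H; exfalso; apply: Hsep => x y xS yS.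
    have xC : x \in C by move: (H x); rewrite xS /= negbK.
    have yC : y \in C by move: (H y); rewrite yS /= negbK.
    rewrite Cdef in xC; rewrite Cdef in yC.
    exact: connect_in_trans (connect_in_sym esym xC) yC.
  have notC : forall z, connect_in e S d z -> z \notin C.
    by move=> z dz; apply/negP => zC; move/negP: dC; apply; apply: inC' zC dz.
  have [ds dt] : d != s /\ d != t by move: dS; rewrite !inE negb_or => /andP [].
  have [P1 [pP1 aP1]] := toward Hb st ds dt.
  have ts : t != s by rewrite eq_sym.
  have [P2 [pP2 aP2]] := toward Hb ts dt ds.
  rewrite setUC in aP2.
  have pW : path e s (rcons (rev P1 ++ d :: P2) t).
    by rewrite rcons_cat rcons_cons path_cat_cons (path_rev_sym esym pP1) pP2.
  have WC : all [predC C] (rev P1 ++ d :: P2).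
    apply/allP => z; rewrite mem_cat mem_rev in_cons => /or3P [zP1 | /eqP -> | zP2];
      apply: notC.
    - move: pP1; rewrite rcons_path => /andP [p1 _].
      by apply: (walk_connect_in dS p1 aP1); rewrite in_cons zP1 orbT.
    - by rewrite /connect_in dS connect0.
    - move: pP2; rewrite rcons_path => /andP [p2 _].
      by apply: (walk_connect_in dS p2 aP2); rewrite in_cons zP2 orbT.
  have ly : last s (rcons (rev P1 ++ d :: P2) t) = t by rewrite last_rcons.
  move: ly; case: (shortenP pW) => p' pp' up' sub'.
  case/lastP: p' pp' up' sub' => [|Rint z] pp' up' sub' /=.
    by move=> sts; rewrite sts eqxx in st.
  rewrite last_rcons => zt; subst z.
  exists Rint; split; first by apply/andP.
  apply/allP => z zR.
  have : z \in rcons (rev P1 ++ d :: P2) t by apply: sub'; rewrite mem_rcons in_cons zR orbT.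
  rewrite mem_rcons in_cons => /orP [/eqP zt | zW]; last exact: (allP WC).
  by move: up'; rewrite /= rcons_uniq -zt zR /= andbF.
exists v, q1, q2; split => //; split => //.
- exact: (side esym noK4 Hnt sP aC sR aR).
- rewrite -all_rev; apply: (side esym noK4 Hnt (s := t) (t := s) (v := v) (q2 := rev q1) (R := rev R) (C := C)).
  + by rewrite -rev_mid; apply: spath_rev.
  + by rewrite -rev_mid all_rev.
  + exact: spath_rev.
  + by rewrite all_rev.
Qed.
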